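(* For every protocol $\Pi$ for the game $G_n$ there exists an order oblivious protocol $\Pi'$ for $G_n$ such that $E(\Pi')\subseteq E(\Pi)$. In particular (with Bob using his optimal output rule in $\Pi'$), $c(\Pi')\le c(\Pi)$.
   Context: The game $G_n$ ($n$ a positive integer): Alice receives, as a stream, a permutation $\sigma=(\sigma_1,\dots,\sigma_n)$ of $[n]=\{1,\dots,n\}$ followed by a bit $b\in\{0,1\}$. She has an array $\mathbf{v}=(v_1,\dots,v_n)$ whose cells are initially empty (denoted $*$). For each $i<n$, upon receiving $\sigma_i$ she writes a bit in cell $\sigma_i$; this bit may depend on everything she has received so far ($\sigma_1,\dots,\sigma_i$), and once written cannot be changed. Upon receiving $\sigma_n$ and $b$ she writes $b$ in cell $\sigma_n$. Bob receives the completed array $\mathbf{v}\in\{0,1\}^n$ and outputs a set $J\subseteq[n]$ as a function of $\mathbf{v}$. A protocol (Alice's writing rule together with Bob's output map) is valid if $\sigma_n\in J$ for all $\sigma,b$; its cost $c(\Pi)$ is the maximum of $|J|$ over all $\sigma,b$. All protocols are assumed valid. For a protocol $\Pi$ and permutation $\sigma$, $\Pi_A(\sigma)\in\{0,1,*\}^n$ denotes the array after Alice has processed $\sigma_1,\dots,\sigma_{n-1}$ (so only cell $\sigma_n$ is $*$); it is identified with the edge of the Hamming cube $\{0,1\}^n$ joining its two completions. $E(\Pi)$ is the set of edges $\Pi_A(\sigma)$ over all permutations $\sigma$. A protocol is order oblivious if the bit Alice writes in cell $\sigma_i$ depends only on $\sigma_i$ and on the current partial assignment of $\mathbf{v}$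 (which cells are filled and with which bits), and not on the order in which $\sigma_1,\dots,\sigma_{i-1}$ arrived. *)

(* Defs.v *)
From mathcomp Require Import all_boot all_order all_fingroup.
Set Implicit Arguments. Unset Strict Implicit. Unset Printing Implicit Defensive.

Section Game.
Variable n : nat.

(* A permutation sigma = (sigma_1,...,sigma_n) is s : 'S_n, with sigma_{k+1} = s k
   (0-indexed positions k : 'I_n).  Cells are indexed by 'I_n. *)

(* Alice's writing rule: the bit written in cell sigma_{k+1} is a function of the
   received prefix (sigma_1, ..., sigma_{k+1}). *)
Definition alice_rule := seq 'I_n -> bool.

Definition bob_rule := {ffun 'I_n -> bool} -> {set 'I_n}.

Definition prefix (s : 'S_n) (k : nat) : seq 'I_n :=
  [seq s j | j : 'I_n <- enum 'I_n & (nat_of_ord j <= k)%N].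

Definition pos (s : 'S_n) (x : 'I_n) : nat := val ((s^-1)%g x).

(* Partial array after Alice processed the first k elements (None = empty cell). *)
Definition partial_before (A : alice_rule) (s : 'S_n) (k : nat)
  : {ffun 'I_n -> option bool} :=
  [ffun x => if (pos s x < k)%N then Some (A (prefix s (pos s x))) else None].

(* Pi_A(sigma): the array after sigma_1..sigma_{n-1} (only cell sigma_n empty),
   identified with an edge of the Hamming cube. *)
Definition partialA (A : alice_rule) (s : 'S_n) : {ffun 'I_n -> option bool} :=
  partial_before A s n.-1.

Definition final (A : alice_rule) (s : 'S_n) (b : bool) : {ffun 'I_n -> bool} :=
  [ffun x => if pos s x == n.-1 then b else A (prefix s (pos s x))].

Definition edges (A : alice_rule) : {set {ffun 'I_n -> option bool}} :=
  [set partialA A s | s : 'S_n].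

Definition valid (A : alice_rule) (B : bob_rule) : Prop :=
  forall (s : 'S_n) (b : bool) (x : 'I_n), pos s x = n.-1 -> x \in B (final A s b).

Definition cost (A : alice_rule) (B : bob_rule) : nat :=
  \max_(s : 'S_n) \max_(b : bool) #|B (final A s b)|.

Definition order_oblivious (A : alice_rule) : Prop :=
  exists f : 'I_n -> {ffun 'I_n -> option bool} -> bool,
    forall (s : 'S_n) (k : 'I_n), (k < n.-1)%N ->
      A (prefix s k) = f (s k) (partial_before A s k).

End Game.

(* Main.v *)
Require Import Defs.
From mathcomp Require Import all_boot all_order all_fingroup.
From Stdlib Require Import ClassicalEpsilon.
Set Implicit Arguments. Unset Strict Implicit. Unset Printing Implicit Defensive.

Section Aux.
Variable n : nat.

Definition lst (s : 'S_n) : seq 'I_n := [seq s j | j <- enum 'I_n].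

Lemma lst_size s : size (lst s) = n.
Proof. by rewrite size_map size_enum_ord. Qed.

Lemma lst_uniq s : uniq (lst s).
Proof. rewrite map_inj_uniq ?enum_uniq //; exact: perm_inj. Qed.

Lemma index_lst s x : index x (lst s) = pos s x.
Proof.
rewrite /lst /pos -{1}(permKV s x) index_map ?index_enum_ord //; exact: perm_inj.
Qed.

Lemma prefix_lst s (k : nat) : (k < n)%N -> Defs.prefix s k = take k.+1 (lst s).
Proof.
move=> kn; rewrite /Defs.prefix /lst -map_take; congr map.
apply: (inj_map val_inj).
rewrite map_take.
apply: etrans (esym (filter_map val (fun i => (i <= k)%N) _)) _.
rewrite val_enum_ord.
by rewrite (filter_iota_leq 0 kn) take_iota; congr iota; rewrite (minn_idPl _).
Qed.

Lemma index_take_lt (T : eqType) (x : T) (l : seq T) k :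
  (index x l < k)%N -> index x (take k l) = index x l.
Proof.
elim: l k => [|y l IH] [|k] //=.
by case: eqP => // _ H; rewrite IH.
Qed.

Definition run (A : alice_rule n) (p : seq 'I_n) : {ffun 'I_n -> option bool} :=
  [ffun x => if x \in p then Some (A (take (index x p).+1 p)) else None].

Lemma pos_lt (s : 'S_n) (x : 'I_n) : (pos s x < n)%N.
Proof. exact: ltn_ord. Qed.

Lemma pb_run A s (k : nat) : (k <= n)%N -> partial_before A s k = run A (take k (lst s)).
Proof.
move=> kn; apply/ffunP=> x; rewrite !ffunE.
have xin : x \in lst s by rewrite /lst -{1}(permKV s x) map_f ?mem_enum.
rewrite in_take // index_lst.
case: ifP => // H.
by rewrite index_take_lt ?index_lst // take_takel // prefix_lst ?pos_lt.
Qed.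

Definition upd (P : {ffun 'I_n -> option bool}) (x : 'I_n) (v : option bool) :
  {ffun 'I_n -> option bool} := [ffun y => if y == x then v else P y].

Lemma run_rcons A q x : x \notin q ->
  run A (rcons q x) = upd (run A q) x (Some (A (rcons q x))).
Proof.
move=> xq; apply/ffunP=> y; rewrite !ffunE mem_rcons in_cons -cats1 index_cat.
case: eqP => [->|/eqP yx].
  by rewrite (negbTE xq) /= eqxx addn0 take_oversize // size_cat addn1.
case yq: (y \in q) => //=.
by rewrite takel_cat // index_mem.
Qed.

Section Cons.
Variable A : alice_rule n.

Definition qch (P : {ffun 'I_n -> option bool}) : seq 'I_n :=
  epsilon (inhabits [::]) (fun q : seq 'I_n => uniq q /\ run A q = P).
Definition fA (x : 'I_n) (P : {ffun 'I_n -> option bool}) := A (rcons (qch P) x).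
Definition step P x := upd P x (Some (fA x P)).
Definition state (p : seq 'I_n) := foldl step [ffun _ => None] p.
Definition A' : alice_rule n :=
  fun q => if q is y :: q' then fA (last y q') (state (belast y q')) else false.

Lemma A'_rcons p x : A' (rcons p x) = fA x (state p).
Proof. by case: p => //= y p; rewrite last_rcons belast_rcons. Qed.

Lemma state_rcons p x : state (rcons p x) = step (state p) x.
Proof. by rewrite /state -cats1 foldl_cat. Qed.

Lemma state_run p : uniq p -> state p = run A' p.
Proof.
elim/last_ind: p => [|p x IH]; first by move=> _; apply/ffunP=> y; rewrite !ffunE.
rewrite rcons_uniq => /andP[xp up].
by rewrite state_rcons run_rcons // A'_rcons IH.
Qed.

Lemma state_reach p : uniq p -> exists q, uniq q /\ run A q = state p.
Proof.
elim/last_ind: p => [|p x IH].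
  by move=> _; exists [::]; split => //; apply/ffunP=> y; rewrite !ffunE.
rewrite rcons_uniq => /andP[xp up].
have [uq0 rq0] := epsilon_spec (inhabits [::])
   (fun q : seq 'I_n => uniq q /\ run A q = state p) (IH up).
set q0 := epsilon _ _ in uq0 rq0.
have xq0 : x \notin q0.
  apply/negP=> xin.
  have := f_equal (fun f : {ffun 'I_n -> option bool} => f x) rq0; rewrite state_run // !ffunE xin.
  by rewrite (negbTE xp).
exists (rcons q0 x); split; first by rewrite rcons_uniq xq0.
by rewrite run_rcons // rq0 state_rcons.
Qed.

End Cons.

Lemma pos_pred (Hn : (0 < n)%N) (s : 'S_n) x : (pos s x < n.-1)%N = (pos s x != n.-1).
Proof.
by rewrite ltn_neqAle -ltnS prednK // pos_lt andbT.
Qed.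

Lemma final_partial (Hn : (0 < n)%N) (A : alice_rule n) (s : 'S_n) b x :
  final A s b x = if partialA A s x is Some c then c else b.
Proof.
by rewrite !ffunE pos_pred //; case: (pos s x == n.-1).
Qed.

Lemma partial_none (Hn : (0 < n)%N) (A : alice_rule n) (s : 'S_n) x :
  (partialA A s x == None) = (pos s x == n.-1).
Proof. by rewrite !ffunE pos_pred //; case: (pos s x == n.-1). Qed.

Lemma final_eq (Hn : (0 < n)%N) (A1 A2 : alice_rule n) (s1 s2 : 'S_n) b :
  partialA A1 s1 = partialA A2 s2 -> final A1 s1 b = final A2 s2 b.
Proof. by move=> E; apply/ffunP=> x; rewrite !final_partial // E. Qed.

Lemma lst_perm (Hn : (0 < n)%N) (full : seq 'I_n) :
  uniq full -> size full = n -> exists t : 'S_n, lst t = full.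
Proof.
move=> uf sf.
set x0 := Ordinal Hn.
have finj : injective (fun j : 'I_n => nth x0 full j).
  move=> i j /eqP; rewrite nth_uniq ?sf // => /eqP; exact: val_inj.
exists (perm finj).
apply: (@eq_from_nth _ x0); first by rewrite lst_size sf.
move=> i; rewrite lst_size => ilt.
rewrite /lst (nth_map x0) ?size_enum_ord // permE.
by rewrite nth_enum_ord.
Qed.

Lemma edge_A' (Hn : (0 < n)%N) (A : alice_rule n) (s : 'S_n) : exists t, partialA (A' A) s = partialA A t.
Proof.
set p := take n.-1 (lst s).
have up : uniq p by rewrite take_uniq // lst_uniq.
have sp : size p = n.-1 by rewrite size_takel // lst_size leq_pred.
have [q [uq rq]] := state_reach A up.
have qp : q =i p.
  move=> x; have := f_equal (fun f : {ffun 'I_n -> option bool} => f x) rq.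
  rewrite state_run // !ffunE.
  by case: (x \in q); case: (x \in p).
have sq : size q = n.-1 by rewrite -sp; apply: perm_size; apply: uniq_perm.
set full := q ++ [seq y <- enum 'I_n | y \notin q].
have uf : uniq full.
  rewrite cat_uniq uq filter_uniq ?enum_uniq // andbT /=.
  by apply/hasPn=> y; rewrite mem_filter => /andP[].
have sf : size full = n.
  rewrite -{2}(size_enum_ord n); apply: perm_size; apply: uniq_perm; rewrite ?enum_uniq // => y.
  by rewrite mem_cat mem_filter mem_enum andbT orbN.
have [t lt] := lst_perm Hn uf sf.
exists t.
rewrite /partialA !pb_run ?leq_pred // lt take_size_cat // rq.
by rewrite state_run.
Qed.


Lemma oo_A' (A : alice_rule n) : order_oblivious (A' A).
Proof.
exists (@fA A) => s k kn.
have kn' : (k <= n)%N by apply: ltnW.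
rewrite prefix_lst // (take_nth k) ?lst_size // pb_run // A'_rcons.
rewrite state_run ?take_uniq ?lst_uniq //.
rewrite /lst (nth_map k) ?size_enum_ord //.
by congr (fA _ (s _) _); apply: val_inj; rewrite /= nth_enum_ord.
Qed.

End Aux.

Theorem proposition2 (n : nat) (Hn : (0 < n)%N)
    (A : alice_rule n) (B : bob_rule n) :
  valid A B ->
  exists (A' : alice_rule n) (B' : bob_rule n),
    [/\ valid A' B', order_oblivious A',
        edges A' \subset edges A & (cost A' B' <= cost A B)%N].
Proof.
move=> vAB.
pose B' : bob_rule n := fun v => [set x | [exists s : 'S_n, [exists b : bool,
   (final (A' A) s b == v) && (pos s x == n.-1)]]].
exists (A' A), B'; split.
- move=> s b x px; rewrite inE; apply/existsP; exists s; apply/existsP; exists b.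
  by apply/andP; split; apply/eqP.
- exact: oo_A'.
- apply/subsetP=> e /imsetP[s _ ->].
  have [t ->] := edge_A' Hn A s.
  by apply/imsetP; exists t.
- apply/bigmax_leqP=> s _; apply/bigmax_leqP=> b _.
  have [t Et] := edge_A' Hn A s.
  apply: (@leq_trans #|B (final A t b)|).
    apply: subset_leq_card; apply/subsetP=> x.
    rewrite inE => /existsP[s' /existsP[b' /andP[/eqP Ev /eqP px]]].
    have [t' Et'] := edge_A' Hn A s'.
    rewrite -(final_eq Hn b Et) -Ev (final_eq Hn b' Et').
    apply: vAB; apply/eqP; rewrite -(partial_none Hn A t' x) -Et' (partial_none Hn (A' A) s' x).
    by apply/eqP.
  apply: (leq_trans _ (leq_bigmax t)) => /=.
  exact: (leq_bigmax (F := fun b => #|B (final A t b)|) b).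
Qed.
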